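(* Let $G$ be a finite simple graph with at least one edge. The following statements are equivalent: (1) $G$ has a matching that saturates every vertex of $\mathrm{core}(G)$; (2) $G$ has a minimum mitigating set which is a matching; (3) for every $S\subseteq \mathrm{core}(G)$, $\mathrm{es}_{\Delta}(G[N[S]])\leq \frac{|N[S]|}{2}$.
   Context: $\mathrm{core}(G)$ is the set of vertices of $G$ of maximum degree $\Delta(G)$. A set $S\subseteq E(G)$ is a mitigating set if $\Delta(G-S)\leq\Delta(G)-1$; a minimum mitigating set is one of minimum size. The $\Delta$-edge stability number $\mathrm{es}_{\Delta}(H)$ of a graph $H$ is the minimum number of edges whose removal results in a subgraph $H'$ with $\Delta(H')=\Delta(H)-1$. For $S\subseteq V(G)$, $N[S]=\bigcup_{v\in S}(N(v)\cup\{v\})$ is the closed neighborhood of $S$, and $G[N[S]]$ is the subgraph induced by it. *)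

(* Defs.v *)
(* A finite simple graph is a symmetric irreflexive relation
   e on a finType T; edges are 2-element sets {x,y} with e x y. *)
From mathcomp Require Import all_boot all_order.
Set Implicit Arguments. Unset Strict Implicit. Unset Printing Implicit Defensive.

Section Graphs.
Variables (T : finType) (e : rel T).

Definition edges (V : {set T}) : {set {set T}} :=
  [set [set x; y] | x in V, y in V & e x y].

Definition deg (V : {set T}) (F : {set {set T}}) (x : T) : nat :=
  #|[set y in V | e x y && ([set x; y] \notin F)]|.

Definition maxdeg (V : {set T}) (F : {set {set T}}) : nat :=
  \max_(x in V) deg V F x.

Definition Delta : nat := maxdeg setT set0.

Definition core : {set T} := [set x | deg setT set0 x == Delta].

Definition mitigating (F : {set {set T}}) : Prop :=
  F \subset edges setT /\ maxdeg setT F <= Delta - 1.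

Definition min_mitigating (F : {set {set T}}) : Prop :=
  mitigating F /\ forall F' : {set {set T}}, mitigating F' -> #|F| <= #|F'|.

Definition matching (M : {set {set T}}) : Prop :=
  M \subset edges setT /\
  forall A B, A \in M -> B \in M -> A != B -> [disjoint A & B].

Definition saturates (M : {set {set T}}) (S : {set T}) : Prop :=
  forall x, x \in S -> exists2 A, A \in M & x \in A.

Definition closed_nbhd (S : {set T}) : {set T} :=
  S :|: [set y | [exists x in S, e x y]].

Definition es_Delta (V : {set T}) : nat :=
  \big[minn/#|edges V|]_(F : {set {set T}} |
       (F \subset edges V) && (maxdeg V F == maxdeg V set0 - 1)) #|F|.

End Graphs.

(* Main.v *)
Require Import Defs.
From mathcomp Require Import all_boot all_order.
From Stdlib Require Import Classical.
From mathcomp Require Import zify.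
Set Implicit Arguments. Unset Strict Implicit. Unset Printing Implicit Defensive.

Lemma gdisjP (U : finType) (A B : {set U}) :
  reflect (forall x, x \in A -> x \in B -> False) [disjoint A & B].
Proof.
rewrite disjoints_subset; apply: (iffP subsetP) => h x xA.
  by move=> xB; have := h x xA; rewrite inE xB.
by rewrite inE; apply/negP => xB; exact: h x xA xB.
Qed.

Section Aux.
Variables (T : finType) (e : rel T).
Hypotheses (esym : symmetric e) (eirr : irreflexive e).
Implicit Types (M N F : {set {set T}}) (V S : {set T}).

Lemma edgesP (W : {set T}) A : reflect (exists x y, [/\ x \in W, y \in W, e x y & A = [set x; y]]) (A \in edges e W).
Proof.
apply: (iffP imset2P).
  case=> x y xW; rewrite inE => /andP[yW exy] ->; by exists x, y.
case=> x [y [xW yW exy ->]].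
by apply: (@Imset2spec _ _ _ _ _ _ _ x y) => //; rewrite inE yW.
Qed.

Lemma edge_card (W : {set T}) A : A \in edges e W -> #|A| = 2.
Proof.
case/edgesP=> x [y [_ _ exy ->]]; rewrite cards2.
suff -> : x != y by [].
by apply: contraTneq exy => ->; rewrite eirr.
Qed.

Lemma edge_sub (W : {set T}) A : A \in edges e W -> A \subset W.
Proof. by case/edgesP=> x [y [xW yW _ ->]]; apply/subsetP=> z; rewrite !inE => /orP[]/eqP->. Qed.

Lemma edge_restr (W W' : {set T}) A : A \in edges e W -> A \subset W' -> A \in edges e W'.
Proof.
case/edgesP=> x [y [xW yW exy ->]] /subsetP sA; apply/edgesP; exists x, y; split=> //.
  by apply: sA; rewrite !inE eqxx.
by apply: sA; rewrite !inE eqxx orbT.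
Qed.

Lemma disjP (A B : {set T}) :
  reflect (forall x, x \in A -> x \in B -> False) [disjoint A & B].
Proof.
rewrite disjoints_subset; apply: (iffP subsetP) => h x xA.
  by move=> xB; have := h x xA; rewrite inE xB.
by rewrite inE; apply/negP => xB; exact: h x xA xB.
Qed.

Definition cov (M : {set {set T}}) : {set T} := \bigcup_(A in M) A.
Definition disj (M : {set {set T}}) := forall A B, A \in M -> B \in M -> A != B -> [disjoint A & B].
Definition mat (W : {set T}) (M : {set {set T}}) := M \subset edges e W /\ disj M.

Lemma covP (M : {set {set T}}) x : reflect (exists2 A, A \in M & x \in A) (x \in cov M).
Proof. exact: bigcupP. Qed.

Lemma disj_sub (M M' : {set {set T}}) : M' \subset M -> disj M -> disj M'.
Proof. by move/subsetP=> sM dM A B AM BM; apply: dM; apply: sM. Qed.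

Lemma card_cov_sum (M : {set {set T}}) (X : {set T}) : disj M -> #|cov M :&: X| = \sum_(A in M) #|A :&: X|.
Proof.
move: {2}#|M| (erefl #|M|) => n; elim: n M => [|n IH] M cM dM.
  by move/cards0_eq: cM => ->; rewrite /cov !big_set0 set0I cards0.
have [A AM]: exists A, A \in M by apply/set0Pn; rewrite -card_gt0 cM.
rewrite /cov (big_setD1 A AM) /= (big_setD1 A AM) /=.
have dM' : disj (M :\ A) by apply: disj_sub dM; apply: subD1set.
have cM' : #|M :\ A| = n by rewrite (cardsD1 A M) AM in cM; case: cM.
rewrite -(IH _ cM' dM') /cov setIUl.
have dAR : [disjoint A & \bigcup_(B in M :\ A) B].
  apply: bigcup_disjoint=> B; rewrite !inE => /andP[BA BM].
  by apply: dM; rewrite // eq_sym.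
have dj : [disjoint A :&: X & (\bigcup_(B in M :\ A) B) :&: X].
  apply: disjointWl (subsetIl A X) _; rewrite disjoint_sym.
  by apply: disjointWl (subsetIl _ X) _; rewrite disjoint_sym.
by apply/eqP; rewrite (leq_card_setU _ _).2 dj.
Qed.

Lemma card_sep (M : {set {set T}}) (P : pred {set T}) :
  #|[set A in M | P A]| = \sum_(A in M) (P A : nat).
Proof.
rewrite -sum1_card [RHS]big_mkcond [LHS]big_mkcond; apply: eq_bigr => A _.
by rewrite !inE; case: (A \in M); case: (P A).
Qed.

Lemma cov_sub (W : {set T}) M : M \subset edges e W -> cov M \subset W.
Proof.
move/subsetP=> sM; apply/subsetP=> x /covP[A /sM AM xA].
by apply: (subsetP (edge_sub AM)).
Qed.

Lemma card_cov (W : {set T}) M : mat W M -> #|cov M| = 2 * #|M|.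
Proof.
case=> /subsetP sM dM; rewrite -[cov M]setIT card_cov_sum //.
rewrite (eq_bigr (fun _ => 2)); first by rewrite sum_nat_const mulnC.
by move=> A AM; rewrite setIT (edge_card (sM _ AM)).
Qed.

Lemma mat_mono (W W' : {set T}) M : W \subset W' -> mat W M -> mat W' M.
Proof.
move=> sW [/subsetP sM dM]; split=> //; apply/subsetP=> A AM.
have AE := sM _ AM; exact: (edge_restr AE (subset_trans (edge_sub AE) sW)).
Qed.

Lemma mat_restr (W W' : {set T}) M : cov M \subset W' -> mat W M -> mat W' M.
Proof.
move=> sW [/subsetP sM dM]; split=> //; apply/subsetP=> A AM.
apply: edge_restr (sM _ AM) _; apply: subset_trans sW.
by apply/subsetP=> x xA; apply/covP; exists A.
Qed.

Lemma mat_subset (W : {set T}) M M' : M' \subset M -> mat W M -> mat W M'.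
Proof. by move=> sM [sE dM]; split; [apply: subset_trans sE|apply: disj_sub dM]. Qed.

Lemma mat0 (W : {set T}) : mat W set0.
Proof. by split; [apply: sub0set|move=> A B; rewrite inE]. Qed.

Lemma sub_cov (M : {set {set T}}) A : A \in M -> A \subset cov M.
Proof. by move=> AM; apply/subsetP=> x xA; apply/covP; exists A. Qed.

Lemma cover_match (W : {set T}) (F : {set {set T}}) (S : {set T}) :
  F \subset edges e W -> S \subset cov F ->
  exists N, mat S N /\ #|S| <= #|F| + #|N|.
Proof.
move: {2}#|F| (erefl #|F|) => n; elim: n F S => [|n IH] F S cF sF sS.
  move/cards0_eq: cF => F0; exists set0; split; first exact: mat0.
  suff -> : S = set0 by rewrite cards0.
  by apply/eqP; rewrite -subset0; apply: subset_trans sS _; rewrite /cov F0 big_set0.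
have [A AF]: exists A, A \in F by apply/set0Pn; rewrite -card_gt0 cF.
have cF' : #|F :\ A| = n by rewrite (cardsD1 A F) AF in cF; case: cF.
have sF' : F :\ A \subset edges e W by apply: subset_trans sF; apply: subD1set.
have sS' : S :\: A \subset cov (F :\ A).
  apply/subsetP=> x; rewrite inE => /andP[xA xS].
  have /covP[B BF xB] := subsetP sS x xS.
  apply/covP; exists B => //; rewrite !inE BF andbT.
  by apply: contraNneq xA => <-.
have [N' [[sN' dN'] leS']] := IH _ _ cF' sF' sS'.
have AE := subsetP sF _ AF; have cA := edge_card AE.
have cS := cardsID A S.
case: (boolP (A \subset S)) => AS.
  have A0 : A != set0 by rewrite -card_gt0 cA.
  have AN' : A \notin N'.
    apply/negP=> AN'; have [a aA] : exists a, a \in A by apply/set0Pn.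
    by have := subsetP (edge_sub (subsetP sN' _ AN')) a aA; rewrite inE aA.
  exists (A |: N'); split.
    split.
      apply/subsetP=> B; rewrite !inE => /orP[/eqP->|BN']; first exact: edge_restr AE AS.
      have BE := subsetP sN' _ BN'.
      exact: (edge_restr BE (subset_trans (edge_sub BE) (subsetDl _ _))).
    move=> B1 B2; rewrite !inE => /orP[/eqP->|B1N] /orP[/eqP->|B2N]; rewrite ?eqxx // => neq.
    - have BE := subsetP sN' _ B2N; rewrite disjoint_sym; apply: disjointWl (edge_sub BE) _.
      by rewrite disjoint_sym; apply/disjP=> x xA; rewrite inE xA.
    - have BE := subsetP sN' _ B1N; apply: disjointWl (edge_sub BE) _.
      by apply/disjP=> x; rewrite inE => /andP[/negP].
    - exact: dN' B1N B2N neq.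
  have cN : #|A |: N'| = #|N'|.+1 by rewrite cardsU1 AN'.
  have cSA : #|S :&: A| = 2 by rewrite (setIidPr AS) cA.
  rewrite cN cF -cF' -cS cSA; clear -leS'; lia.
exists N'; split.
  split=> //; apply: subset_trans sN' _; apply/subsetP=> B BE.
  exact: (edge_restr BE (subset_trans (edge_sub BE) (subsetDl _ _))).
have : #|S :&: A| <= 1.
  have [a aA aS] : exists2 a, a \in A & a \notin S.
    by move/subsetPn: AS => [a aA aS]; exists a.
  have : S :&: A \subset A :\ a.
    by apply/subsetP=> x; rewrite !inE => /andP[xS ->]; rewrite andbT; apply: contraTneq xS => ->.
  move/subset_leq_card; move: (cardsD1 a A); rewrite aA cA add1n => -[<-] //.
rewrite cF -cF' -cS; move: leS'; clear; lia.
Qed.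


Lemma card1I (a : T) (X : {set T}) : #|[set a] :&: X| = (a \in X).
Proof.
case aX: (a \in X).
  by rewrite (setIidPl _) ?cards1 // sub1set.
by rewrite disjoint_setI0 ?cards0 // disjoints1 aX.
Qed.

Lemma card2I (a b : T) (X : {set T}) : a != b ->
  #|[set a; b] :&: X| = (a \in X) + (b \in X).
Proof.
move=> nab; rewrite setIUl -!card1I; apply/eqP; rewrite (leq_card_setU _ _).2.
apply: disjointWl (subsetIl _ _) _; rewrite disjoint_sym.
apply: disjointWl (subsetIl _ _) _; by rewrite disjoints1 inE eq_sym.
Qed.

Lemma sub2 (a b : T) (X : {set T}) : ([set a; b] \subset X) = (a \in X) && (b \in X).
Proof. by rewrite subUset !sub1set. Qed.

Lemma meet2 (a b : T) (X : {set T}) : ([set a; b] :&: X != set0) = (a \in X) || (b \in X).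
Proof.
apply/set0Pn/orP=> [[z]|[aX|bX]]; first by rewrite !inE => /andP[/orP[]/eqP-> ->]; auto.
  by exists a; rewrite !inE eqxx aX.
by exists b; rewrite !inE eqxx bX orbT.
Qed.

Lemma edge2 (W : {set T}) A : A \in edges e W ->
  exists a b, [/\ a \in W, b \in W, e a b, a != b & A = [set a; b]].
Proof.
case/edgesP=> a [b [aW bW eab ->]]; exists a, b; split=> //.
by apply: contraTneq eab => ->; rewrite eirr.
Qed.

Definition nb (W S : {set T}) := [set y in W | [exists x in S, e x y]].
Definition bd (W S : {set T}) := nb W S :\: S.
Definition Hc (W C : {set T}) := forall S : {set T}, S \subset C ->
  exists N, mat S N /\ #|S| <= 2 * #|N| + #|bd W S|.
Definition tight (W S : {set T}) := forall N, mat S N -> 2 * #|N| + #|bd W S| <= #|S|.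
Definition intc (C : {set T}) M := #|[set A in M | A \subset C]|.

Lemma nbP (W S : {set T}) y : reflect (y \in W /\ exists2 x, x \in S & e x y) (y \in nb W S).
Proof.
rewrite inE; apply: (iffP andP) => [[yW /existsP[x /andP[xS exy]]]|[yW [x xS exy]]].
  by split=> //; exists x.
by split=> //; apply/existsP; exists x; rewrite xS.
Qed.

Lemma bd_edge (W S : {set T}) a b : a \in S -> b \in W -> e a b -> b \notin S -> b \in bd W S.
Proof. by move=> aS bW eab bS; rewrite inE bS; apply/nbP; split=> //; exists a. Qed.

Lemma bd_sub (W S : {set T}) : bd W S \subset W.
Proof. by apply/subsetP=> y; rewrite inE => /andP[_ /nbP[]]. Qed.

Lemma bd_notin (W S : {set T}) y : y \in bd W S -> y \notin S.
Proof. by rewrite inE => /andP[]. Qed.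


Lemma tightL (W S : {set T}) M : tight W S -> mat W M -> S \subset cov M ->
  let M1 := [set A in M | A :&: S != set0] in
  [/\ bd W S \subset cov M1, cov M1 \subset S :|: bd W S &
      forall N, mat S N -> #|N| <= #|[set A in M1 | A \subset S]|].
Proof.
move=> tS mM sS M1.
have mM1 : mat W M1 by apply: mat_subset mM; apply/subsetP=> A; rewrite inE => /andP[].
have [sM1 dM1] := mM1.
have sS1 : S \subset cov M1.
  apply/subsetP=> x xS; have /covP[A AM xA] := subsetP sS x xS.
  apply/covP; exists A => //; rewrite inE AM /=; by apply/set0Pn; exists x; rewrite !inE xA xS.
have csub : cov M1 \subset S :|: bd W S.
  apply/subsetP=> x /covP[A AM1 xA]; rewrite in_setU.
  have := subsetP sM1 _ AM1; case/edge2 => a [b [aW bW eab nab AE]].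
  rewrite inE AE meet2 in AM1; case/andP: AM1 => _ abS.
  move: xA; rewrite AE in_set2 => /orP[]/eqP->.
    case aS: (a \in S) => //=; rewrite aS /= in abS.
    apply: (bd_edge abS aW); first by rewrite esym.
    by rewrite aS.
  case bS: (b \in S) => //=; rewrite bS /= orbF in abS.
  by apply: (bd_edge abS bW) => //; rewrite bS.
set N1 := [set A in M1 | A \subset S].
have mN1 : mat S N1.
  split; last by apply: disj_sub dM1; apply/subsetP=> A; rewrite inE => /andP[].
  apply/subsetP=> A; rewrite inE => /andP[AM1 AS]; exact: edge_restr (subsetP sM1 _ AM1) AS.
have e1 : #|S| = #|M1| + #|N1|.
  rewrite -{1}(setIidPr sS1) card_cov_sum // /N1 card_sep -sum1_card -big_split /=.
  apply: eq_bigr => A AM1.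
  have := subsetP sM1 _ AM1; case/edge2 => a [b [aW bW eab nab AE]].
  move: AM1; rewrite AE inE meet2 => /andP[_ abS]; rewrite card2I // sub2.
  by case: (a \in S) abS; case: (b \in S).
have e2 : #|cov M1 :&: ~: S| + #|N1| = #|M1|.
  rewrite card_cov_sum // /N1 card_sep -sum1_card -big_split /=.
  apply: eq_bigr => A AM1.
  have := subsetP sM1 _ AM1; case/edge2 => a [b [aW bW eab nab AE]].
  move: AM1; rewrite AE inE meet2 => /andP[_ abS]; rewrite card2I // sub2 !inE.
  by case: (a \in S) abS; case: (b \in S).
have t1 := tS _ mN1.
have sB : cov M1 :&: ~: S \subset bd W S.
  apply/subsetP=> x; rewrite !inE => /andP[xc xS].
  by have := subsetP csub x xc; rewrite !inE (negbTE xS).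
have cB : #|bd W S| <= #|cov M1 :&: ~: S| by lia.
have eB : cov M1 :&: ~: S = bd W S.
  by apply/eqP; rewrite eqEcard sB cB.
split=> //.
  by rewrite -eB subsetIl.
move=> N mN; have := tS _ mN; rewrite eB in e2; lia.
Qed.


Lemma bdE (W S : {set T}) x : (x \in bd W S) = (x \notin S) && (x \in nb W S).
Proof. by rewrite /bd in_setD. Qed.

Lemma nb_edge (W S : {set T}) a b : a \in S -> b \in W -> e a b -> b \in nb W S.
Proof. by move=> aS bW eab; apply/nbP; split=> //; exists a. Qed.

Lemma cov_mono M M' : M \subset M' -> cov M \subset cov M'.
Proof.
move/subsetP=> sM; apply/subsetP=> x /covP[A AM xA]; apply/covP; exists A => //; exact: sM.
Qed.

Lemma int_count (W S C : {set T}) M1 : S \subset C -> M1 \subset edges e W -> disj M1 ->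
  (forall A, A \in M1 -> A :&: S != set0) -> bd W S \subset cov M1 ->
  #|[set A in M1 | A \subset S]| + #|C :&: bd W S| <= #|[set A in M1 | A \subset C]|.
Proof.
move=> SC sM1 dM1 mS bS.
have -> : #|C :&: bd W S| = #|cov M1 :&: (C :&: bd W S)|.
  by rewrite [cov M1 :&: _](setIidPr _) //; apply: (subset_trans (subsetIr C _) bS).
rewrite card_cov_sum // !card_sep -big_split /=; apply: leq_sum => A AM1.
have := subsetP sM1 _ AM1; case/edge2 => a [b [aW bW eab nab AE]].
have := mS _ AM1; rewrite AE meet2 card2I // !sub2 !in_setI !bdE.
move: (subsetP SC a) (subsetP SC b).
by case: (a \in S); case: (b \in S); case: (a \in C); case: (b \in C);
   case: (a \in nb W S); case: (b \in nb W S) => // /(_ isT) // /(_ isT).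
Qed.


Lemma HcSplit (W C S : {set T}) : S \subset C -> C \subset W -> tight W S -> Hc W C ->
  Hc (W :\: (S :|: nb W S)) (C :\: (S :|: nb W S)).
Proof.
move=> SC CW tS hC S' sS'.
set W2 := W :\: (S :|: nb W S).
have S'W : S' \subset W by apply: subset_trans sS' (subset_trans (subsetDl _ _) CW).
have S'n : forall x, x \in S' -> (x \notin S) && (x \notin nb W S).
  by move=> x /(subsetP sS'); rewrite in_setD in_setU negb_or => /andP[].
have SS'C : S :|: S' \subset C by rewrite subUset SC (subset_trans sS' (subsetDl _ _)).
have [N [[sN dN] leN]] := hC (S :|: S') SS'C.
set N1 := [set A in N | A \subset S]; set N2 := [set A in N | A \subset S'].
have NN : N \subset N1 :|: N2.
  apply/subsetP=> A AN; have := subsetP sN _ AN; case/edge2 => a [b [aSS bSS eab nab AE]].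
  rewrite !inE AN !AE !sub2 /=; move: aSS bSS; rewrite !in_setU.
  case aS: (a \in S); case bS: (b \in S) => //=; rewrite ?orbF //.
  - move=> _ bS'; have := S'n b bS'; rewrite bS /=.
    by rewrite (nb_edge aS (subsetP S'W b bS') eab).
  - move=> aS' _; have := S'n a aS'; rewrite aS /=.
    by rewrite (nb_edge bS (subsetP S'W a aS') _) // esym.
  - by move=> -> ->.
have cN : #|N| <= #|N1| + #|N2|.
  by apply: leq_trans (subset_leq_card NN) _; apply: leq_card_setU.
have mN1 : mat S N1.
  split; last by apply: disj_sub dN; apply/subsetP=> A; rewrite inE => /andP[].
  apply/subsetP=> A; rewrite inE => /andP[AN AS]; exact: edge_restr (subsetP sN _ AN) AS.
have mN2 : mat S' N2.
  split; last by apply: disj_sub dN; apply/subsetP=> A; rewrite inE => /andP[].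
  apply/subsetP=> A; rewrite inE => /andP[AN AS]; exact: edge_restr (subsetP sN _ AN) AS.
have t1 := tS _ mN1.
have cS : #|S :|: S'| = #|S| + #|S'|.
  apply/eqP; rewrite (leq_card_setU _ _).2; apply/disjP=> x xS xS'.
  by have := S'n x xS'; rewrite xS.
have sB : bd W (S :|: S') \subset bd W S :|: bd W2 S'.
  apply/subsetP=> z; rewrite bdE in_setU negb_or => /andP[/andP[zS zS'] /nbP[zW [x]]].
  rewrite in_setU => /orP[xS|xS'] exz; rewrite in_setU !bdE zS /=.
    by rewrite (nb_edge xS zW exz).
  case zn: (z \in nb W S) => //=; rewrite zS' /=.
  apply/nbP; split; last by exists x.
  by rewrite in_setD in_setU (negbTE zS) zn zW.
have cB : #|bd W (S :|: S')| <= #|bd W S| + #|bd W2 S'|.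
  by apply: leq_trans (subset_leq_card sB) _; apply: leq_card_setU.
exists N2; split=> //; clear -leN cN t1 cS cB; lia.
Qed.


Definition good (W C : {set T}) M :=
  [/\ mat W M, C \subset cov M & forall N, mat C N -> #|N| <= intc C M].

Lemma mat_sep (W X : {set T}) M : mat W M -> mat X [set A in M | A \subset X].
Proof.
case=> sM dM; split; last by apply: disj_sub dM; apply/subsetP=> A; rewrite inE => /andP[].
apply/subsetP=> A; rewrite inE => /andP[AM AS]; exact: edge_restr (subsetP sM _ AM) AS.
Qed.

Lemma combine (W C S : {set T}) M1 M2 : S \subset C -> C \subset W -> tight W S ->
  mat W M1 -> S \subset cov M1 ->
  good (W :\: (S :|: nb W S)) (C :\: (S :|: nb W S)) M2 ->
  good W C ([set A in M1 | A :&: S != set0] :|: M2).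
Proof.
move=> SC CW tS mM1 sS [mM2 cC2 opt2].
set W2 := W :\: (S :|: nb W S); set C2 := C :\: (S :|: nb W S).
set M1' := [set A in M1 | A :&: S != set0].
have [bS csub optS] := tightL tS mM1 sS.
have mM1' : mat W M1' by apply: mat_subset mM1; apply/subsetP=> A; rewrite inE => /andP[].
have [sM1' dM1'] := mM1'.
have mM2W : mat W M2 by apply: mat_mono mM2; apply: subsetDl.
have [sM2 dM2] := mM2W.
have c2W2 : cov M2 \subset W2 by apply: cov_sub (mM2.1).
have dis : forall x, x \in cov M1' -> x \in cov M2 -> False.
  move=> x x1 x2; have := subsetP c2W2 x x2; rewrite in_setD in_setU.
  have := subsetP csub x x1; rewrite in_setU bdE.
  by case: (x \in S); case: (x \in nb W S).
have sS1 : S \subset cov M1'.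
  apply/subsetP=> x xS; have /covP[A AM xA] := subsetP sS x xS.
  apply/covP; exists A => //; rewrite inE AM /=.
  by apply/set0Pn; exists x; rewrite !inE xA xS.
have mM : mat W (M1' :|: M2).
  split; first by rewrite subUset sM1' sM2.
  move=> A B; rewrite !in_setU => /orP[AM|AM] /orP[BM|BM] nAB.
  - exact: dM1'.
  - apply/disjP=> x xA xB; apply: (dis x); [exact: subsetP (sub_cov AM) x xA|exact: subsetP (sub_cov BM) x xB].
  - apply/disjP=> x xA xB; apply: (dis x); [exact: subsetP (sub_cov BM) x xB|exact: subsetP (sub_cov AM) x xA].
  - exact: dM2.
split=> //.
  apply/subsetP=> c cC.
  case cS: (c \in S); first exact: (subsetP (cov_mono (subsetUl _ _)) c (subsetP sS1 c cS)).
  case cn: (c \in nb W S).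
    apply: (subsetP (cov_mono (subsetUl _ _)) c); apply: (subsetP bS).
    by rewrite bdE cS cn.
  apply: (subsetP (cov_mono (subsetUr _ _)) c); apply: (subsetP cC2).
  by rewrite in_setD in_setU cS cn cC.
move=> N mN; have [sN dN] := mN.
set NS := [set A in N | A \subset S]; set N2 := [set A in N | A \subset C2].
have h1 : #|N| <= #|NS| + #|N2| + #|C :&: bd W S|.
  apply: (@leq_trans (#|NS| + #|N2| + #|cov N :&: (C :&: bd W S)|)); last first.
    by rewrite leq_add2l; apply: subset_leq_card; apply: subsetIr.
  rewrite card_cov_sum // /NS /N2 !card_sep -sum1_card -!big_split /=.
  apply: leq_sum => A AN.
  have := subsetP sN _ AN; case/edge2 => a [b [aC bC eab nab AE]].
  rewrite AE card2I // !sub2 !in_setD !in_setI !in_setU !bdE aC bC /=.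
  have hab : a \in S -> b \in nb W S by move=> aS; apply: nb_edge aS (subsetP CW b bC) eab.
  have hba : b \in S -> a \in nb W S by move=> bS'; apply: nb_edge bS' (subsetP CW a aC) _; rewrite esym.
  move: hab hba.
  case: (a \in S); case: (b \in S); case: (a \in nb W S); case: (b \in nb W S) => hab hba;
    by [| have := hab isT | have := hba isT].
have h2 := optS _ (mat_sep S mN).
have h3 := opt2 _ (mat_sep C2 mN).
have mS1 : forall A, A \in M1' -> A :&: S != set0 by move=> A; rewrite inE => /andP[].
have h4 := int_count SC sM1' dM1' mS1 bS.
have h5 : #|[set A in M1' | A \subset C]| + intc C2 M2 <= intc C (M1' :|: M2).
  rewrite /intc.
  have dXY : [disjoint [set A in M1' | A \subset C] & [set A in M2 | A \subset C2]].
    apply/gdisjP=> A AX AY.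
    have AM1 : A \in M1' by move: AX; rewrite inE => /andP[].
    have AM2 : A \in M2 by move: AY; rewrite inE => /andP[].
    have : #|A| = 2 by apply: edge_card (subsetP sM1' _ AM1).
    case: (set_0Vmem A) => [->|[x xA]]; first by rewrite cards0.
    by move=> _; apply: (dis x); [exact: subsetP (sub_cov AM1) x xA|exact: subsetP (sub_cov AM2) x xA].
  move: dXY; rewrite -(leq_card_setU _ _).2 => /eqP <-.
  apply: subset_leq_card; apply/subsetP=> A; rewrite !inE => /orP[]/andP[AM AS].
    by rewrite AM.
  by rewrite AM orbT (subset_trans AS (subsetDl _ _)).
rewrite -/M1' in h2.
rewrite -/NS in h2; rewrite -/N2 -/C2 in h3.
clear -h1 h2 h3 h4 h5; lia.
Qed.


Lemma bd_del (W S : {set T}) y : #|bd W S| <= #|bd (W :\ y) S| + 1.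
Proof.
have sB : bd W S \subset y |: bd (W :\ y) S.
  apply/subsetP=> z; rewrite !bdE in_setU1 => /andP[zS /nbP[zW [x xS exz]]].
  case: (z =P y) => //= /eqP zy; rewrite bdE zS /=; apply/nbP; split; last by exists x.
  by rewrite in_setD1 zy zW.
by apply: leq_trans (subset_leq_card sB) _; rewrite cardsU1 addnC leq_add2l leq_b1.
Qed.

Lemma HcDel (W C' : {set T}) (y : T) :
  (forall S : {set T}, S \subset C' -> S != set0 -> exists N, mat S N /\ #|S| < 2 * #|N| + #|bd W S|) ->
  Hc (W :\ y) C'.
Proof.
move=> h S SC; case: (eqVneq S set0) => [->|S0].
  by exists set0; split; [exact: mat0|rewrite cards0].
have [N [mN lt]] := h S SC S0; exists N; split=> //.
have := bd_del W S y; lia.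
Qed.

Lemma good_tight (W C : {set T}) M : tight W C -> mat W M -> C \subset cov M -> good W C M.
Proof.
move=> tC mM sC; have [_ _ opt] := tightL tC mM sC; split=> // N mN.
apply: leq_trans (opt N mN) _; apply: subset_leq_card; apply/subsetP=> A.
by rewrite !inE => /andP[/andP[-> _] ->].
Qed.


Lemma L2 n : forall W C : {set T}, #|W| + #|C| < n -> C \subset W -> Hc W C ->
  exists M, good W C M.
Proof.
elim: n => [|n IH] W C // sz CW hC.
case: (classic (exists S : {set T}, [/\ S \subset C, S != set0, S != C & tight W S])).
  case=> S [SC S0 SnC tS].
  have ltS : #|S| < #|C| by apply: proper_card; rewrite properEneq SnC SC.
  have [M1 [mM1 sS1 _]] : exists M, good W S M.
    apply: IH; first by lia.
      exact: subset_trans SC CW.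
    by move=> S' sS'; apply: hC; apply: subset_trans sS' SC.
  set W2 := W :\: (S :|: nb W S); set C2 := C :\: (S :|: nb W S).
  have [s sS] := set0Pn _ S0.
  have ltC2 : #|C2| < #|C|.
    apply: proper_card; rewrite properE subsetDl /=; apply/subsetPn; exists s.
      exact: subsetP SC s sS.
    by rewrite in_setD in_setU sS.
  have leW2 : #|W2| <= #|W| by apply: subset_leq_card; apply: subsetDl.
  have [M2 gM2] : exists M, good W2 C2 M.
    apply: IH; first by lia.
      apply/subsetP=> c; rewrite !in_setD => /andP[-> cC] /=; exact: subsetP CW c cC.
    exact: HcSplit.
  by exists ([set A in M1 | A :&: S != set0] :|: M2); apply: combine.
move=> hN.
have nt : forall S : {set T}, S \subset C -> S != set0 -> S != C ->
    exists N, mat S N /\ #|S| < 2 * #|N| + #|bd W S|.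
  move=> S SC S0 SnC; apply: NNPP => hS; apply: hN; exists S; split=> // N mN.
  by rewrite leqNgt; apply/negP => lt; apply: hS; exists N.
case: (eqVneq (bd W C) set0) => [b0|].
  have [N [mN leN]] := hC C (subxx C).
  rewrite b0 cards0 addn0 in leN.
  have cN := card_cov mN.
  have cNC : cov N \subset C by apply: cov_sub mN.1.
  have eN : cov N = C by apply/eqP; rewrite eqEcard cNC cN.
  exists N; split; first exact: mat_mono CW mN.
    by rewrite eN.
  move=> N' mN'; have := card_cov mN'; have := subset_leq_card (cov_sub mN'.1).
  have : #|N| <= intc C N.
    apply: subset_leq_card; apply/subsetP=> A AN; rewrite inE AN /=.
    by rewrite -eN; apply: sub_cov.
  lia.
case/set0Pn=> y; rewrite bdE => /andP[yC /nbP[yW [x xC exy]]].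
have yx : x != y by apply: contraNneq yC => <-.
case: (classic (tight W C)) => tC.
  have [M' [mM' sM' _]] : exists M, good (W :\ y) (C :\ x) M.
    apply: IH.
    - have : #|W :\ y| < #|W| by rewrite (cardsD1 y W) yW.
      have : #|C :\ x| < #|C| by rewrite (cardsD1 x C) xC.
      lia.
    - apply/subsetP=> c; rewrite !in_setD1 => /andP[_ cC]; rewrite (subsetP CW c cC) andbT.
      by apply: contraNneq yC => <-.
    - apply: HcDel => S SCx S0; apply: nt => //.
        by apply: subset_trans SCx (subsetDl _ _).
      apply/eqP=> SE; move: SCx; rewrite SE => /subsetP/(_ x xC).
      by rewrite !inE eqxx.
  case xM: (x \in cov M').
    exists M'; apply: good_tight => //; first by apply: mat_mono mM'; apply: subsetDl.
    apply/subsetP=> c cC; case: (c =P x) => [->//|/eqP cx].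
    by apply: (subsetP sM'); rewrite in_setD1 cx.
  exists ([set x; y] |: M'); apply: good_tight => //.
    have [sE dM] := mM'.
    split.
      apply/subsetP=> A; rewrite in_setU1 => /orP[/eqP->|AM].
        by apply/edgesP; exists x, y; split=> //; apply: (subsetP CW).
      exact: (subsetP (mat_mono (subsetDl W [set y]) mM').1).
    have dxy : forall B, B \in M' -> [disjoint [set x; y] & B].
      move=> B BM; apply/disjP=> z; rewrite in_set2 => /orP[]/eqP-> zB.
        by move: xM; rewrite (subsetP (sub_cov BM) _ zB).
      by have := subsetP (edge_sub (subsetP sE _ BM)) y zB; rewrite !inE eqxx.
    move=> A B; rewrite !in_setU1 => /orP[/eqP->|AM] /orP[/eqP->|BM]; rewrite ?eqxx // => nAB.
    - exact: dxy.
    - by rewrite disjoint_sym; apply: dxy.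
    - exact: dM.
  apply/subsetP=> c cC; case: (c =P x) => [->|/eqP cx].
    by apply/covP; exists [set x; y]; rewrite !inE eqxx.
  apply: (subsetP (cov_mono (subsetU1 _ _))).
  by apply: (subsetP sM'); rewrite in_setD1 cx.
have [M [mM sM opt]] : exists M, good (W :\ y) C M.
  apply: IH.
  - have : #|W :\ y| < #|W| by rewrite (cardsD1 y W) yW.
    lia.
  - apply/subsetP=> c cC; rewrite in_setD1 (subsetP CW c cC) andbT.
    by apply: contraNneq yC => <-.
  - apply: HcDel => S SC S0; case: (eqVneq S C) => [->|SnC]; last exact: nt.
    apply: NNPP => h; apply: tC => N mN; rewrite leqNgt; apply/negP => lt.
    by apply: h; exists N.
by exists M; split=> //; apply: mat_mono mM; apply: subsetDl.
Qed.


Lemma deg0 V x : deg e V set0 x = #|[set y in V | e x y]|.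
Proof. by rewrite /deg; apply: eq_card => y; rewrite !inE andbT. Qed.

Lemma degF V F x : deg e V F x <= deg e V set0 x.
Proof.
rewrite deg0; apply: subset_leq_card; apply/subsetP=> y; rewrite !inE.
by case/andP=> -> /andP[-> _].
Qed.

Lemma deg_mono V V' x : V \subset V' -> deg e V set0 x <= deg e V' set0 x.
Proof.
move=> sV; rewrite !deg0; apply: subset_leq_card; apply/subsetP=> y; rewrite !inE.
by case/andP=> /(subsetP sV) -> ->.
Qed.

Lemma deg_Delta x : deg e setT set0 x <= Delta e.
Proof. exact: (@leq_bigmax_cond _ (fun x => x \in setT) (deg e setT set0) x (in_setT x)). Qed.

Lemma maxdeg_le V F m : (forall x, x \in V -> deg e V F x <= m) -> maxdeg e V F <= m.
Proof. by move=> h; apply/bigmax_leqP => x; apply: h. Qed.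

Lemma le_maxdeg V F x : x \in V -> deg e V F x <= maxdeg e V F.
Proof. by move=> xV; apply: (@leq_bigmax_cond _ (fun x => x \in V) (deg e V F) x xV). Qed.

Lemma maxdeg0_le V : maxdeg e V set0 <= Delta e.
Proof.
apply: maxdeg_le => x _; apply: leq_trans (deg_Delta x).
by apply: deg_mono; apply: subsetT.
Qed.

Lemma deg_lt V F x : deg e V F x < deg e V set0 x ->
  exists y, [/\ y \in V, e x y & [set x; y] \in F].
Proof.
move=> lt; apply: NNPP => hn; move: lt; rewrite deg0 ltnNge => /negP; apply.
apply: subset_leq_card; apply/subsetP=> y; rewrite !inE => /andP[yV exy].
rewrite yV exy /=; apply/negP => yF; apply: hn; by exists y.
Qed.

Lemma deg_drop V F x y : y \in V -> e x y -> [set x; y] \in F -> deg e V F x < deg e V set0 x.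
Proof.
move=> yV exy yF; rewrite deg0; apply: proper_card; rewrite properE; apply/andP; split.
  by apply/subsetP=> z; rewrite !inE => /andP[-> /andP[-> _]].
by apply/subsetPn; exists y; rewrite !inE ?yV ?exy ?yF.
Qed.

Lemma deg_ge V F x : disj F -> deg e V set0 x <= deg e V F x + 1.
Proof.
move=> dF; rewrite deg0.
have sub : [set y in V | e x y] \subset
   [set y in V | e x y && ([set x; y] \notin F)] :|: [set y in V | e x y && ([set x; y] \in F)].
  by apply/subsetP=> y; rewrite !inE; case: (y \in V); case: (e x y); case: ([set x; y] \in F).
apply: leq_trans (subset_leq_card sub) _; apply: leq_trans (leq_card_setU _ _) _.
rewrite leq_add2l; apply/card_le1_eqP => y z; rewrite !inE => /andP[_ /andP[exy yF]] /andP[_ /andP[exz zF]].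
case: (eqVneq [set x; y] [set x; z]) => [E|nE].
  have : y \in [set x; z] by rewrite -E !inE eqxx orbT.
  rewrite !inE => /orP[/eqP yx|/eqP //]; by move: exy; rewrite yx eirr.
by have := dF _ _ yF zF nE; move/disjP => /(_ x); rewrite !inE eqxx => /(_ isT isT).
Qed.


Lemma cn_bd S : closed_nbhd e S = S :|: bd setT S.
Proof.
apply/setP=> y; rewrite /closed_nbhd !in_setU bdE !inE.
by case: (y \in S).
Qed.

Lemma card_cn S : #|closed_nbhd e S| = #|S| + #|bd setT S|.
Proof.
rewrite cn_bd; apply/eqP; rewrite (leq_card_setU _ _).2.
by apply/disjP=> x xS; rewrite bdE xS.
Qed.

Lemma cn_nbr S s y : s \in S -> e s y -> y \in closed_nbhd e S.
Proof. by move=> sS esy; rewrite /closed_nbhd !inE; apply/orP; right; apply/existsP; exists s; rewrite sS. Qed.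

Lemma sub_cn S : S \subset closed_nbhd e S.
Proof. by apply/subsetP=> s sS; rewrite /closed_nbhd in_setU sS. Qed.

Lemma deg_cn S s : s \in S -> deg e (closed_nbhd e S) set0 s = deg e setT set0 s.
Proof.
move=> sS; apply/eqP; rewrite eqn_leq deg_mono ?subsetT //= !deg0.
apply: subset_leq_card; apply/subsetP => y /setIdP[_ esy].
by apply/setIdP; split=> //; exact: cn_nbr sS esy.
Qed.

Lemma coreP x : (x \in core e) = (deg e setT set0 x == Delta e).
Proof. by rewrite inE. Qed.

Lemma bigmin_le (I : eqType) (r : seq I) (P : pred I) (f : I -> nat) idx i :
  i \in r -> P i -> \big[minn/idx]_(j <- r | P j) f j <= f i.
Proof.
elim: r => // x r IH; rewrite inE big_cons => /orP[/eqP<-|ir] Pi.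
  by rewrite Pi geq_minl.
case: (P x); last exact: IH ir Pi.
exact: leq_trans (geq_minr _ _) (IH ir Pi).
Qed.

Lemma es_le V F : F \subset edges e V -> maxdeg e V F == maxdeg e V set0 - 1 ->
  es_Delta e V <= #|F|.
Proof.
move=> sF hF; rewrite /es_Delta; apply: bigmin_le; first exact: mem_index_enum.
by rewrite sF hF.
Qed.

Lemma es_ge S : S \subset core e -> 0 < Delta e ->
  exists F, [/\ F \subset edges e (closed_nbhd e S), S \subset cov F
              & #|F| <= es_Delta e (closed_nbhd e S)].
Proof.
move=> Sc D0; set V := closed_nbhd e S.
have dS : forall s, s \in S -> deg e V set0 s = Delta e.
  by move=> s sS; rewrite /V deg_cn //; apply/eqP; rewrite -coreP (subsetP Sc).
rewrite /es_Delta.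
apply: (big_ind (fun m => exists F, [/\ F \subset edges e V, S \subset cov F & #|F| <= m])).
- exists (edges e V); split=> //; apply/subsetP=> s sS.
  have := dS s sS; rewrite deg0 => h.
  have [y] : exists y, y \in [set y in V | e s y] by apply/set0Pn; rewrite -card_gt0 h.
  rewrite inE => /andP[yV esy]; apply/covP; exists [set s; y]; last by rewrite !inE eqxx.
  by apply/edgesP; exists s, y; split=> //; apply: (subsetP (sub_cn S)).
- move=> a b [F1 [s1 c1 l1]] [F2 [s2 c2 l2]]; case: (leqP a b) => ab.
    by exists F1; split=> //; rewrite (minn_idPl ab).
  by exists F2; split=> //; rewrite (minn_idPr (ltnW ab)).
- move=> F /andP[sF /eqP hF]; exists F; split=> //; apply/subsetP=> s sS.
  have sV : s \in V by apply: (subsetP (sub_cn S)).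
  have : deg e V F s < deg e V set0 s.
    rewrite dS //; apply: leq_ltn_trans (le_maxdeg F sV) _; rewrite hF.
    have := maxdeg0_le V; lia.
  case/deg_lt=> y [yV esy yF]; apply/covP; exists [set s; y] => //.
  by rewrite !inE eqxx.
Qed.


Lemma Delta_pos : edges e setT != set0 -> 0 < Delta e.
Proof.
case/set0Pn=> A /edgesP[x [y [_ _ exy _]]].
apply: leq_trans (deg_Delta x); rewrite deg0 card_gt0; apply/set0Pn; exists y.
by rewrite !inE exy.
Qed.

Lemma mit_cov F : 0 < Delta e -> mitigating e F -> core e \subset cov F.
Proof.
move=> D0 [sF hF]; apply/subsetP=> x; rewrite coreP => /eqP dx.
have : deg e setT F x < deg e setT set0 x.
  apply: leq_ltn_trans (le_maxdeg F (in_setT x)) _; rewrite dx; lia.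
case/deg_lt=> y [_ exy yF]; apply/covP; exists [set x; y] => //; by rewrite !inE eqxx.
Qed.

Lemma sat_cov M S : saturates M S <-> S \subset cov M.
Proof.
split=> [h|/subsetP h x xS]; first by apply/subsetP=> x /h [A AM xA]; apply/covP; exists A.
by case/covP: (h x xS) => A AM xA; exists A.
Qed.

Lemma L13 M S : matching e M -> saturates M (core e) -> S \subset core e ->
  2 * es_Delta e (closed_nbhd e S) <= #|closed_nbhd e S|.
Proof.
move=> mM /sat_cov satM Sc; set V := closed_nbhd e S.
have mMs : mat setT M := mM.
set F := [set A in M | A \subset V].
have mF : mat V F := mat_sep V mMs.
have cF : 2 * #|F| <= #|V| by rewrite -(card_cov mF); apply: subset_leq_card; apply: cov_sub mF.1.
suff : es_Delta e V <= #|F| by lia.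
apply: es_le; first exact: mF.1.
case: (set_0Vmem S) => [S0|[s sS]].
  have V0 : V = set0.
    apply/setP=> y; rewrite /V /closed_nbhd S0 !inE; case: existsP => // -[x]; by rewrite inE.
  by rewrite /maxdeg V0 !big_set0.
have dS : forall s, s \in S -> deg e V set0 s = Delta e.
  by move=> s' sS'; rewrite /V deg_cn //; apply/eqP; rewrite -coreP (subsetP Sc).
have sV : s \in V by apply: (subsetP (sub_cn S)).
have mV : maxdeg e V set0 = Delta e.
  apply/eqP; rewrite eqn_leq maxdeg0_le /= -(dS s sS); exact: le_maxdeg.
rewrite mV; apply/eqP/eqP; rewrite eqn_leq; apply/andP; split.
  apply: maxdeg_le => x xV.
  have := degF V F x; have := deg_mono x (subsetT V); have := deg_Delta x.
  case: (ltnP (deg e V set0 x) (Delta e)) => [lt|ge]; first by lia.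
  move=> h1 h2 h3.
  have dx : deg e setT set0 x = Delta e by lia.
  have xc : x \in core e by rewrite coreP dx.
  have [A AM xA] := covP _ _ (subsetP satM x xc).
  have := subsetP mM.1 _ AM; case/edge2 => a [b [_ _ eab nab AE]].
  have [z [exz Ez]] : exists z, e x z /\ A = [set x; z].
    move: xA; rewrite AE !inE => /orP[]/eqP->; first by exists b.
    by exists a; split; [rewrite esym|rewrite /= setUC].
  have nbV : [set y in V | e x y] = [set y in setT | e x y].
    apply/eqP; rewrite eqEcard; apply/andP; split.
      by apply/subsetP=> y; rewrite !inE => /andP[_ ->].
    by rewrite -!deg0; exact: leq_trans h1 ge.
  have zV : z \in V.
    have : z \in [set y in setT | e x y] by rewrite !inE exz.
    by rewrite -nbV inE => /andP[].
  have AF : A \in F.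
    rewrite inE AM Ez /= sub2 zV andbT.
    by [].
  rewrite Ez in AF; have hle : deg e V set0 x <= Delta e by apply: leq_trans h2 h1.
  move: (deg_drop zV exz AF) hle; clear; lia.
have := le_maxdeg F sV; have := @deg_ge V F s mF.2; rewrite dS //.
move=> u1 u2; clear -u1 u2; lia.
Qed.


Lemma edge_at (W : {set T}) A x : A \in edges e W -> x \in A ->
  exists z, [/\ e x z, z \in W & A = [set x; z]].
Proof.
case/edgesP=> a [b [aW bW eab ->]]; rewrite !inE => /orP[]/eqP->; first by exists b.
by exists a; split=> //; [rewrite esym|rewrite setUC].
Qed.

Lemma L32 : (forall S, S \subset core e ->
      2 * es_Delta e (closed_nbhd e S) <= #|closed_nbhd e S|) ->
  0 < Delta e -> exists M, min_mitigating e M /\ matching e M.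
Proof.
move=> h D0.
have hC : Hc setT (core e).
  move=> S Sc; have [F [sF cF lF]] := es_ge Sc D0; have hS := h S Sc.
  have [N [mN lN]] := cover_match sF cF; exists N; split=> //.
  rewrite card_cn in hS; clear -hS lF lN; lia.
have [M [mM cM opt]] := @L2 (#|[set: T]| + #|core e|).+1 setT (core e) (ltnSn _) (subsetT _) hC.
set MC := [set A in M | A :&: core e != set0].
have mMC : mat setT MC by apply: mat_subset mM; apply/subsetP=> A; rewrite inE => /andP[].
have cMC : core e \subset cov MC.
  apply/subsetP=> x xc; have [A AM xA] := covP _ _ (subsetP cM x xc).
  apply/covP; exists A => //; rewrite inE AM /=; apply/set0Pn; exists x; by rewrite inE xA xc.
exists MC; split; last exact: mMC.
have mitMC : mitigating e MC.
  split; first exact: mMC.1.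
  apply: maxdeg_le => x _; case xc: (x \in core e).
    have [A AMC xA] := covP _ _ (subsetP cMC x xc).
    have [z [exz _ Ez]] := edge_at (subsetP mMC.1 _ AMC) xA.
    rewrite Ez in AMC; have := deg_drop (in_setT z) exz AMC.
    move: xc; rewrite coreP => /eqP ->; clear; lia.
  have := degF setT MC x; have := deg_Delta x; move: xc; rewrite coreP.
  move/negbT => ne u1 u2.
  have : deg e setT set0 x < Delta e by rewrite ltn_neqAle ne u1.
  clear -u2; lia.
split=> // F' mitF'.
have cF' := mit_cov D0 mitF'.
have [N [mN lN]] := cover_match mitF'.1 cF'.
have h1 := opt N mN.
have h2 : #|MC| + #|[set A in MC | A \subset core e]| <= #|core e|.
  rewrite -{2}(setIidPr cMC) card_cov_sum; last exact: mMC.2.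
  rewrite card_sep -sum1_card -big_split /=; apply: leq_sum => A AMC.
  have := subsetP mMC.1 _ AMC; case/edge2 => a [b [_ _ eab nab AE]].
  move: AMC; rewrite inE AE meet2 card2I // sub2 => /andP[_].
  by case: (a \in core e); case: (b \in core e).
have h3 : intc (core e) M <= #|[set A in MC | A \subset core e]|.
  apply: subset_leq_card; apply/subsetP=> A; rewrite !inE => /andP[AM Ac].
  rewrite AM Ac /= andbT.
  have := edge_card (subsetP mM.1 _ AM); case: (set_0Vmem A) => [->|[x xA]]; first by rewrite cards0.
  by move=> _; apply/set0Pn; exists x; rewrite inE xA (subsetP Ac x xA).
clear -h1 h2 h3 lN; lia.
Qed.

Lemma L21 : (exists M, min_mitigating e M /\ matching e M) -> 0 < Delta e ->
  exists M, matching e M /\ saturates M (core e).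
Proof.
move=> [M [[mit _] mM]] D0; exists M; split=> //.
by apply/sat_cov; apply: mit_cov.
Qed.

End Aux.

Theorem theorem2p3 (T : finType) (e : rel T) :
  symmetric e -> irreflexive e -> edges e setT != set0 ->
  ((exists M, matching e M /\ saturates M (core e)) <->
   (exists M, min_mitigating e M /\ matching e M)) /\
  ((exists M, min_mitigating e M /\ matching e M) <->
   (forall S : {set T}, S \subset core e ->
      2 * es_Delta e (closed_nbhd e S) <= #|closed_nbhd e S|)).
Proof.
move=> esym eirr E0; have D0 := Delta_pos E0.
have h13 : (exists M, matching e M /\ saturates M (core e)) ->
   (forall S : {set T}, S \subset core e ->
      2 * es_Delta e (closed_nbhd e S) <= #|closed_nbhd e S|).
  by move=> [M [mM sM]] S Sc; apply: (L13 esym eirr mM sM Sc).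
have h32 := L32 esym eirr.
have h21 := @L21 T e.
split; split=> h.
- exact: h32 (h13 h) D0.
- exact: h21 h D0.
- exact: h13 (h21 h D0).
- exact: h32 h D0.
Qed.
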